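(* Let $n\geq 3$ and let $\rho>0$, $q>0$ be constants. Let $(m,\mathbf{U})$ lie in the interior of the convex hull $K_{\rho,q}^{\mathrm{co}}$. Then there exist $\bar m\in\mathbb{R}^n$ and $\bar{\mathbf{U}}\in\mathbb{S}_0^{n\times n}$ such that the closed segment with endpoints $(m-\bar m,\mathbf{U}-\bar{\mathbf{U}})$ and $(m+\bar m,\mathbf{U}+\bar{\mathbf{U}})$ is contained in the interior of $K_{\rho,q}^{\mathrm{co}}$ and is parallel to $$\Big(a,\frac{a\otimes a}{\rho}\Big)-\Big(b,\frac{b\otimes b}{\rho}\Big)$$ for some $a,b\in\mathbb{R}^n$ with $|a|=|b|=\sqrt{n\rho q}$. Moreover, $$|\bar m|\geq\frac{C}{\sqrt{n\rho q}}\big(n\rho q-|m|^2\big),$$ where $C>0$ is a constant depending only on $n$.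
   Context: $\mathbb{S}_0^{n\times n}$ denotes the real symmetric trace-free $n\times n$ matrices. For constants $\rho,q>0$, $$K_{\rho,q}=\Big\{(m,\mathbf{U})\in\mathbb{R}^n\times\mathbb{S}_0^{n\times n}:\frac{m\otimes m}{\rho}-\mathbf{U}=q\mathbf{I}_n\Big\}$$ (equivalently $|m|=\sqrt{n\rho q}$ and $\mathbf{U}=\frac{m\otimes m}{\rho}-\frac{|m|^2}{n\rho}\mathbf{I}_n$), and $K_{\rho,q}^{\mathrm{co}}$ is its convex hull in $\mathbb{R}^n\times\mathbb{S}_0^{n\times n}$. *)

(* Defs.v *)
From HB Require Import structures.
From mathcomp Require Import all_boot all_order all_algebra.
From mathcomp Require Import reals.
Set Implicit Arguments. Unset Strict Implicit. Unset Printing Implicit Defensive.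
Import Order.TTheory GRing.Theory Num.Theory.
Local Open Scope ring_scope.

Section Defs.
Variables (R : realType) (n : nat).

Definition sqnorm (m : 'rV[R]_n) : R := \sum_(i < n) m 0 i ^+ 2.
Definition vnorm (m : 'rV[R]_n) : R := Num.sqrt (sqnorm m).
Definition frob2 (U : 'M[R]_n) : R := \sum_(i < n) \sum_(j < n) U i j ^+ 2.
Definition outer (m : 'rV[R]_n) : 'M[R]_n := m^T *m m.

Definition sym0 (U : 'M[R]_n) : Prop := U^T = U /\ \tr U = 0.

Definition Kset (rho q : R) (p : 'rV[R]_n * 'M[R]_n) : Prop :=
  sym0 p.2 /\ rho^-1 *: outer p.1 - p.2 = q%:M.

Definition convhull (A : 'rV[R]_n * 'M[R]_n -> Prop)
  (p : 'rV[R]_n * 'M[R]_n) : Prop :=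
  exists (k : nat) (lam : 'I_k -> R) (x : 'I_k -> 'rV[R]_n * 'M[R]_n),
    (forall i, 0 <= lam i) /\ \sum_(i < k) lam i = 1 /\
    (forall i, A (x i)) /\
    p.1 = \sum_(i < k) lam i *: (x i).1 /\
    p.2 = \sum_(i < k) lam i *: (x i).2.

(* interior of A as a subset of the space R^n x S_0^{n x n}
   (Euclidean topology, distance^2 = |m - m'|^2 + |U - U'|_F^2) *)
Definition interior_pt (A : 'rV[R]_n * 'M[R]_n -> Prop)
  (p : 'rV[R]_n * 'M[R]_n) : Prop :=
  sym0 p.2 /\
  exists eps : R, 0 < eps /\
    forall p' : 'rV[R]_n * 'M[R]_n, sym0 p'.2 ->
      sqnorm (p'.1 - p.1) + frob2 (p'.2 - p.2) < eps ^+ 2 -> A p'.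

Definition Kco (rho q : R) := convhull (Kset rho q).

End Defs.

(* Main.v *)
Require Import Defs.
From HB Require Import structures.
From mathcomp Require Import all_boot all_order all_algebra.
From mathcomp Require Import reals ring lra.
Import Order.TTheory GRing.Theory Num.Theory.
Local Open Scope ring_scope.

Section S.
Variables (R : realType) (n : nat).

Lemma convhull_conv A (p1 p2 : 'rV[R]_n * 'M[R]_n) (th : R) :
  0 <= th <= 1 -> convhull A p1 -> convhull A p2 ->
  convhull A (th *: p1.1 + (1 - th) *: p2.1, th *: p1.2 + (1 - th) *: p2.2).
Proof.
move=> /andP[th0 th1] [k1 [l1 [x1 [l1p [l1s [x1A [e11 e12]]]]]]]
  [k2 [l2 [x2 [l2p [l2s [x2A [e21 e22]]]]]]].
pose lam (i : 'I_(k1 + k2)) := match split i with inl a => th * l1 a | inr b => (1 - th) * l2 b end.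
pose x (i : 'I_(k1 + k2)) := match split i with inl a => x1 a | inr b => x2 b end.
have hl a : split (lshift k2 a) = inl a by exact: (unsplitK (inl a)).
have hr b : split (rshift k1 b) = inr b by exact: (unsplitK (inr b)).
exists (k1 + k2)%N, lam, x; split; last split; last split; last split.
- move=> i; rewrite /lam; case: (split i) => a; apply: mulr_ge0 => //.
  by rewrite subr_ge0.
- rewrite big_split_ord /= /lam.
  under eq_bigr => a _ do rewrite hl.
  under [X in _ + X]eq_bigr => a _ do rewrite hr.
  by rewrite -!mulr_sumr l1s l2s !mulr1 addrC subrK.
- by move=> i; rewrite /x; case: (split i).
- rewrite big_split_ord /= /lam /x.
  under eq_bigr => a _ do rewrite hl.
  under [X in _ = _ + X]eq_bigr => a _ do rewrite hr.
  by rewrite /= e11 e21 !scaler_sumr; congr (_ + _); apply: eq_bigr => a _; rewrite scalerA.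
- rewrite big_split_ord /= /lam /x.
  under eq_bigr => a _ do rewrite hl.
  under [X in _ = _ + X]eq_bigr => a _ do rewrite hr.
  by rewrite /= e12 e22 !scaler_sumr; congr (_ + _); apply: eq_bigr => a _; rewrite scalerA.
Qed.

Definition enc (p : 'rV[R]_n * 'M[R]_n) : 'rV[R]_(1 + (n + n * n)) :=
  row_mx (const_mx 1) (row_mx p.1 (mxvec p.2)).

Lemma dependence k (x : 'I_k -> 'rV[R]_n * 'M[R]_n) :
  (1 + (n + n * n) < k)%N ->
  exists mu : 'I_k -> R, (exists j, mu j != 0) /\ \sum_i mu i = 0 /\
    \sum_i mu i *: (x i).1 = 0 /\ \sum_i mu i *: (x i).2 = 0.
Proof.
move=> hk.
pose M := \matrix_(i < k) enc (x i).
have hker : kermx M != 0.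
  apply/negP => /eqP h.
  have := mxrank_ker M; rewrite h mxrank0 => /esym/eqP; rewrite subn_eq0 => hle.
  have := leq_trans hle (rank_leq_col M); rewrite leqNgt hk //.
case/rowV0Pn: hker => v /sub_kermxP vM v0.
have E c : \sum_i v 0 i * enc (x i) 0 c = 0.
  apply: (@eq_trans _ _ ((v *m M) 0 c)); last by rewrite vM mxE.
  rewrite mxE; apply: eq_bigr => i _; congr (_ * _); rewrite /M [X in _ = X]mxE. by [].
exists (fun i => v 0 i); split; last split; last split.
- apply/existsP; move: v0; apply: contraR; rewrite negb_exists => /forallP h.
  apply/eqP/rowP => j; rewrite mxE; apply/eqP; move: (h j); by rewrite negbK.
- rewrite -[RHS](E (lshift _ 0)); apply: eq_bigr => i _.
  by rewrite /enc row_mxEl mxE mulr1.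
- apply/rowP => a; rewrite summxE mxE -[RHS](E (rshift 1 (lshift _ a))).
  by apply: eq_bigr => i _; rewrite /enc row_mxEr row_mxEl mxE.
- apply/matrixP => a b; rewrite summxE mxE -[RHS](E (rshift 1 (rshift n (mxvec_index a b)))).
  by apply: eq_bigr => i _; rewrite /enc !row_mxEr mxvecE mxE.
Qed.

Definition rep (A : 'rV[R]_n * 'M[R]_n -> Prop) (p : 'rV[R]_n * 'M[R]_n) k
  (lam : 'I_k -> R) (x : 'I_k -> 'rV[R]_n * 'M[R]_n) :=
    (forall i, 0 <= lam i) /\ \sum_(i < k) lam i = 1 /\
    (forall i, A (x i)) /\
    p.1 = \sum_(i < k) lam i *: (x i).1 /\
    p.2 = \sum_(i < k) lam i *: (x i).2.

Lemma exists_min k (P : pred 'I_k) (f : 'I_k -> R) (j0 : 'I_k) :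
  P j0 -> exists j, P j /\ forall i, P i -> f j <= f i.
Proof.
move=> Pj0. case: (Order.TotalTheory.arg_minP f Pj0) => j Pj H.
by exists j; split.
Qed.

Lemma carath_step A p k lam x : (1 + (n + n * n) < k.+1)%N ->
  @rep A p k.+1 lam x -> exists lam' x', @rep A p k lam' x'.
Proof.
move=> hk [l0 [ls [xA [e1 e2]]]].
have [mu [[j0 mj0] [ms [mx1 mx2]]]] := @dependence k.+1 x hk.
have [jp mjp] : exists j, 0 < mu j.
  case: (boolP [exists j, 0 < mu j]) => [/existsP//|/existsPn hn].
  have hle i : 0 <= - mu i by rewrite oppr_ge0 leNgt; apply: hn.
  have := psumr_eq0P (P := xpredT) (fun i _ => hle i).
  rewrite sumrN ms oppr0 => /(_ erefl j0 erefl) /eqP; rewrite oppr_eq0.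
  by move/negP: mj0.
have [j [mj jmin]] := @exists_min k.+1 _ (fun i => lam i / mu i) _ (mjp : (fun i => 0 < mu i) jp).
set t := lam j / mu j.
have t0 : 0 <= t by rewrite divr_ge0 // ltW.
pose l' i := lam i - t * mu i.
have l'j : l' j = 0 by rewrite /l' /t mulfVK ?subrr // gt_eqF.
have l'0 i : 0 <= l' i.
  rewrite /l' subr_ge0; case: (ltP 0 (mu i)) => hm.
    by have := jmin i hm; rewrite -/t ler_pdivlMr.
  by apply: le_trans (l0 i); rewrite mulr_ge0_le0.
have sl : \sum_i l' i = 1 by rewrite sumrB -mulr_sumr ms mulr0 subr0.
have s1 : \sum_i l' i *: (x i).1 = p.1.
  rewrite e1 /l'; under eq_bigr => i _ do rewrite scalerBl -scalerA.
  by rewrite sumrB -scaler_sumr mx1 scaler0 subr0.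
have s2 : \sum_i l' i *: (x i).2 = p.2.
  rewrite e2 /l'; under eq_bigr => i _ do rewrite scalerBl -scalerA.
  by rewrite sumrB -scaler_sumr mx2 scaler0 subr0.
exists (fun a => l' (lift j a)), (fun a => x (lift j a)).
split; last split; last split; last split.
- by move=> a; apply: l'0.
- by rewrite -sl (bigD1_ord j) //= l'j add0r.
- by move=> a; apply: xA.
- by rewrite -s1 (bigD1_ord j) //= l'j scale0r add0r.
- by rewrite -s2 (bigD1_ord j) //= l'j scale0r add0r.
Qed.

Lemma carath A p : convhull A p ->
  exists k lam x, (k <= 1 + (n + n * n))%N /\ @rep A p k lam x.
Proof.
case=> k [lam [x H]].
elim: k lam x H => [|k IH] lam x H.
  by exists 0%N, lam, x.
case: (leqP k.+1 (1 + (n + n * n))) => hk.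
  by exists k.+1, lam, x.
have [l' [x' H']] := @carath_step A p k lam x hk H.
exact: IH H'.
Qed.
Implicit Types (v a b : 'rV[R]_n) (M : 'M[R]_n).
Definition dot a b := \sum_(i < n) a 0 i * b 0 i.

Lemma sqnorm_ge0 v : 0 <= sqnorm v.
Proof. by apply: sumr_ge0 => i _; apply: sqr_ge0. Qed.

Lemma sqnormZ (c : R) v : sqnorm (c *: v) = c ^+ 2 * sqnorm v.
Proof. by rewrite /sqnorm mulr_sumr; apply: eq_bigr => i _; rewrite mxE exprMn. Qed.

Lemma frob2Z (c : R) M : frob2 (c *: M) = c ^+ 2 * frob2 M.
Proof.
rewrite /frob2 mulr_sumr; apply: eq_bigr => i _; rewrite mulr_sumr.
by apply: eq_bigr => j _; rewrite mxE exprMn.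
Qed.

Lemma sqnorm0 : sqnorm (0 : 'rV[R]_n) = 0.
Proof. by rewrite /sqnorm big1 // => i _; rewrite mxE expr0n. Qed.

Lemma frob20 : frob2 (0 : 'M[R]_n) = 0.
Proof. by rewrite /frob2 big1 // => i _; rewrite big1 // => j _; rewrite mxE expr0n. Qed.

Lemma vnormZ (c : R) v : vnorm (c *: v) = `|c| * vnorm v.
Proof. by rewrite /vnorm sqnormZ sqrtrM ?sqr_ge0 // sqrtr_sqr. Qed.

Lemma vnorm0 : vnorm (0 : 'rV[R]_n) = 0.
Proof. by rewrite /vnorm sqnorm0 sqrtr0. Qed.

Lemma sqnormB a b : sqnorm (a - b) = sqnorm a + sqnorm b - 2 * dot a b.
Proof.
rewrite /sqnorm /dot mulr_sumr -big_split -sumrB /=; apply: eq_bigr => i _.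
rewrite !mxE; ring.
Qed.

Lemma sqnormB_le a b : sqnorm (a - b) <= 2 * sqnorm a + 2 * sqnorm b.
Proof.
rewrite /sqnorm !mulr_sumr -big_split /=; apply: ler_sum => i _.
rewrite !mxE; have := sqr_ge0 (a 0 i + b 0 i); nra.
Qed.

Lemma sqnorm_sum k (lam : 'I_k -> R) (v : 'I_k -> 'rV[R]_n) :
  sqnorm (\sum_i lam i *: v i) = \sum_i \sum_j lam i * lam j * dot (v i) (v j).
Proof.
rewrite /sqnorm /dot.
under eq_bigr => c _ do rewrite summxE expr2 mulr_suml.
rewrite exchange_big /=; apply: eq_bigr => i _.
under eq_bigr => c _ do rewrite mulr_sumr.
rewrite exchange_big /=; apply: eq_bigr => j _.
rewrite mulr_sumr; apply: eq_bigr => c _; rewrite !mxE; ring.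
Qed.

Lemma tr_outer v : \tr (outer v) = sqnorm v.
Proof.
rewrite /mxtrace /sqnorm; apply: eq_bigr => i _.
by rewrite /outer mxE big_ord1 mxE expr2.
Qed.

Lemma Kset_norm rho q (z : 'rV[R]_n * 'M[R]_n) : 0 < rho ->
  Kset rho q z -> sqnorm z.1 = n%:R * rho * q.
Proof.
move=> r0 [[_ trU] E].
have := congr1 mxtrace E; rewrite linearB /= mxtraceZ trU subr0 tr_outer mxtrace_scalar.
move=> h; have -> : sqnorm z.1 = rho * (rho^-1 * sqnorm z.1) by rewrite mulrA divff ?mul1r // gt_eqF.
by rewrite h -mulr_natl; ring.
Qed.

Lemma sym0D M1 M2 : sym0 M1 -> sym0 M2 -> sym0 (M1 + M2).
Proof. move=> [h1 t1] [h2 t2]; split; first by rewrite linearD /= h1 h2.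
by rewrite mxtraceD t1 t2 addr0. Qed.

Lemma sym0Z (c : R) M : sym0 M -> sym0 (c *: M).
Proof. move=> [h1 t1]; split; first by rewrite linearZ /= h1.
by rewrite mxtraceZ t1 mulr0. Qed.

Lemma sym0N M : sym0 M -> sym0 (- M).
Proof. by move=> h; rewrite -scaleN1r; apply: sym0Z. Qed.

Lemma sym0B M1 M2 : sym0 M1 -> sym0 M2 -> sym0 (M1 - M2).
Proof. by move=> h1 h2; apply: sym0D => //; apply: sym0N. Qed.


Lemma sum_if (V : lmodType R) k (f : 'I_k -> V) (i : 'I_k) (u : R) :
  \sum_l (if l == i then u else 0) *: f l = u *: f i.
Proof.
rewrite (bigD1 i) //= eqxx big1 ?addr0 // => l /negbTE ->; by rewrite scale0r.
Qed.

Lemma sum_if0 k (i : 'I_k) (u : R) :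
  \sum_l (if l == i then u else 0) = u.
Proof.
by rewrite (bigD1 i) //= eqxx big1 ?addr0 // => l /negbTE ->.
Qed.

Lemma seg_in A p k lam x (i j : 'I_k) (u : R) : @rep A p k lam x ->
  `|u| <= lam i * lam j ->
  convhull A (p.1 + u *: ((x i).1 - (x j).1), p.2 + u *: ((x i).2 - (x j).2)).
Proof.
move=> [l0 [ls [xA [e1 e2]]]] hu.
have l1 l : lam l <= 1 by rewrite -ls (bigD1 l) //= lerDl sumr_ge0.
pose d l := (if l == i then u else 0) - (if l == j then u else 0).
have sd (V : lmodType R) (f : 'I_k -> V) : \sum_l d l *: f l = u *: (f i - f j).
  under eq_bigr do rewrite scalerBl.
  by rewrite sumrB !sum_if scalerBr.
have sd0 : \sum_l d l = 0 by rewrite sumrB !sum_if0 subrr.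
have hu1 := ler_norm u; have hu2 := ler_norm (- u); rewrite normrN in hu2.
exists k, (fun l => lam l + d l), x; split; last split; last split; last split.
- move=> l; rewrite /d; case: (eqVneq l i) => [->|ni].
    case: (eqVneq i j) => [->|nj]; first by rewrite subrr addr0.
    have hj : 0 <= 1 - lam j by rewrite subr_ge0.
    have := mulr_ge0 (l0 i) hj; rewrite ?subr0; nra.
  case: (eqVneq l j) => [->|nj].
    have hi : 0 <= 1 - lam i by rewrite subr_ge0.
    have := mulr_ge0 (l0 j) hi; rewrite ?eqxx ?sub0r; nra.
  by rewrite ?(negbTE nj) ?subr0 ?addr0.
- by rewrite big_split /= ls sd0 addr0.
- by [].
- by under eq_bigr do rewrite scalerDl; rewrite big_split /= sd e1.
- by under eq_bigr do rewrite scalerDl; rewrite big_split /= sd e2.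
Qed.

Lemma interior_seg B (m : 'rV[R]_n) (U : 'M[R]_n) vm vU (c : R) :
  interior_pt (convhull B) (m, U) -> sym0 vU -> 0 <= c ->
  (forall u, `|u| <= c -> convhull B (m + u *: vm, U + u *: vU)) ->
  forall s, -1 <= s <= 1 ->
  interior_pt (convhull B) (m + s *: ((c / 2) *: vm), U + s *: ((c / 2) *: vU)).
Proof.
move=> [sU [eps [e0 Hb]]] svU c0 H s /andP[s1 s2].
split; first by apply: sym0D => //; do 2 apply: sym0Z.
exists (eps / 2); split; first by rewrite divr_gt0.
case=> pm pU /= spU hd.
set dm := pm - (m + s *: ((c / 2) *: vm)) in hd *.
set dU := pU - (U + s *: ((c / 2) *: vU)) in hd *.
have K1 : convhull B (m + 2 *: dm, U + 2 *: dU).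
  apply: Hb => /=.
    apply: sym0D => //; apply: sym0Z; apply: sym0B => //; apply: sym0D => //.
    by do 2 apply: sym0Z.
  have -> : m + 2 *: dm - m = 2 *: dm by rewrite addrC addKr.
  have -> : U + 2 *: dU - U = 2 *: dU by rewrite addrC addKr.
  rewrite sqnormZ frob2Z -mulrDr.
  have h4 : eps ^+ 2 = 2 ^+ 2 * (eps / 2) ^+ 2 by field.
  by rewrite h4 ltr_pM2l // exprn_gt0.
have K2 : convhull B (m + (s * c) *: vm, U + (s * c) *: vU).
  apply: H; rewrite normrM (ger0_norm c0) ler_piMl //.
  by rewrite ler_norml s1 s2.
have := @convhull_conv B _ _ 2^-1 _ K1 K2.
have -> : 2^-1 *: (m + 2 *: dm, U + 2 *: dU).1 + (1 - 2^-1) *: (m + (s * c) *: vm, U + (s * c) *: vU).1 = pm.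
  by apply/rowP => a; rewrite /dm !mxE; field.
have -> : 2^-1 *: (m + 2 *: dm, U + 2 *: dU).2 + (1 - 2^-1) *: (m + (s * c) *: vm, U + (s * c) *: vU).2 = pU.
  by apply/matrixP => a b; rewrite /dU !mxE; field.
apply; rewrite invr_ge0 ler0n /= invf_le1 ?ler1n //.
Qed.

Lemma gap_id k (lam : 'I_k -> R) (v : 'I_k -> 'rV[R]_n) r2 :
  \sum_i lam i = 1 -> (forall i, sqnorm (v i) = r2) ->
  r2 - sqnorm (\sum_i lam i *: v i) =
  \sum_i \sum_j lam i * lam j * (sqnorm (v i - v j) / 2).
Proof.
move=> ls hv; rewrite sqnorm_sum.
have e i j : sqnorm (v i - v j) / 2 = r2 - dot (v i) (v j).
  by rewrite sqnormB !hv; field.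
symmetry; under eq_bigr => i _ do under eq_bigr => j _ do rewrite e mulrBr.
under eq_bigr => i _ do rewrite sumrB.
rewrite sumrB; congr (_ - _).
under eq_bigr => i _ do rewrite -mulr_suml -mulr_sumr ls mulr1.
by rewrite -mulr_suml ls mul1r.
Qed.

Lemma exists_max (T : finType) (f : T -> R) (t0 : T) :
  exists t, forall t', f t' <= f t.
Proof.
case: (@Order.TotalTheory.arg_maxP _ _ T t0 xpredT f erefl) => t _ H.
by exists t => t'; apply: H.
Qed.
End S.

Theorem lemma2p3 (R : realType) (n : nat) : (3 <= n)%N ->
  exists C : R, 0 < C /\
  forall (rho q : R), 0 < rho -> 0 < q ->
  forall (m : 'rV[R]_n) (U : 'M[R]_n),
    interior_pt (Kco rho q) (m, U) ->
    exists (mb : 'rV[R]_n) (Ub : 'M[R]_n),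
      sym0 Ub /\
      (forall s : R, -1 <= s <= 1 ->
         interior_pt (Kco rho q) (m + s *: mb, U + s *: Ub)) /\
      (exists (a b : 'rV[R]_n) (t : R),
         vnorm a = Num.sqrt (n%:R * rho * q) /\
         vnorm b = Num.sqrt (n%:R * rho * q) /\
         t != 0 /\
         mb = t *: (a - b) /\
         Ub = t *: (rho^-1 *: outer a - rho^-1 *: outer b)) /\
      C / Num.sqrt (n%:R * rho * q) * (n%:R * rho * q - sqnorm m) <= vnorm mb.
Proof.
move=> n3.
set N : R := (1 + (n + n * n))%:R.
have N0 : 0 < N by rewrite ltr0n.
exists (2 * N ^+ 2)^-1; split; first by rewrite invr_gt0 mulr_gt0 ?exprn_gt0.
move=> rho q r0 q0 m U Hint.
set r2 := n%:R * rho * q.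
have r20 : 0 < r2 by rewrite !mulr_gt0 // ltr0n; apply: leq_trans n3.
set r := Num.sqrt r2.
have rpos : 0 < r by rewrite sqrtr_gt0.
have rr : r ^+ 2 = r2 by rewrite sqr_sqrtr // ltW.
have [sU [eps [e0 Hb]]] := Hint.
have Km : Kco rho q (m, U).
  apply: Hb => //=; by rewrite !subrr sqnorm0 frob20 addr0 exprn_gt0.
have [k [lam [x [hk Hrep]]]] := @carath R n _ _ Km.
have [l0 [ls [xA [e1 e2]]]] := Hrep.
have hnorm i : sqnorm (x i).1 = r2 := @Kset_norm R n rho q (x i) r0 (xA i).
have [i0 _] : exists i0 : 'I_k, True.
  case: (pickP (fun i : 'I_k => true)) => [i1 _|h]; first by exists i1.
  by move: ls; rewrite big1 // => [/eqP|i _]; [rewrite eq_sym oner_eq0 | have := h i].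
pose D i j := vnorm ((x i).1 - (x j).1).
pose F (ij : 'I_k * 'I_k) := lam ij.1 * lam ij.2 * D ij.1 ij.2.
have [[i j] Fmax] := @exists_max R _ F (i0, i0).
set M := F (i, j).
have D0 i' j' : 0 <= D i' j' by apply: sqrtr_ge0.
have M0 : 0 <= M by rewrite /M /F /= !mulr_ge0.
set gap := r2 - sqnorm m.
have gapb : gap <= N ^+ 2 * r * M.
  rewrite /gap; move: e1 => /= ->; rewrite (@gap_id R n k lam (fun i => (x i).1) r2 ls hnorm).
  apply: (@le_trans _ _ (\sum_(i' < k) \sum_(j' < k) (r * M))).
    apply: ler_sum => i' _; apply: ler_sum => j' _.
    have hF := Fmax (i', j'); rewrite /F /= in hF.
    have dd : sqnorm ((x i').1 - (x j').1) = D i' j' ^+ 2.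
      by rewrite /D /vnorm sqr_sqrtr // sqnorm_ge0.
    have D2r : D i' j' <= 2 * r.
      have := @sqnormB_le R n (x i').1 (x j').1; rewrite dd !hnorm -rr => h.
      have hh : D i' j' ^+ 2 <= (2 * r) ^+ 2.
        apply: (le_trans h); rewrite exprMn; lra.
      by move: hh; rewrite ler_sqr // nnegrE ?D0 ?mulr_ge0 ?ltW.
    have ll := mulr_ge0 (l0 i') (l0 j').
    have D2r' : 0 <= 2 * r - D i' j' by rewrite subr_ge0.
    have := mulr_ge0 ll (mulr_ge0 (D0 i' j') D2r').
    have := ler_wpM2l (ltW rpos) hF; rewrite dd => h1 h2; apply: (le_trans _ h1).
    rewrite -subr_ge0.
    have -> : r * (lam i' * lam j' * D i' j') - lam i' * lam j' * (D i' j' ^+ 2 / 2)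
      = lam i' * lam j' * (D i' j' * (2 * r - D i' j')) / 2 by field.
    by rewrite divr_ge0.
  rewrite sumr_const card_ord sumr_const card_ord -(mulr_natl (r * M) k).
  rewrite -(mulr_natl (k%:R * (r * M)) k).
  have kN : k%:R <= N by rewrite ler_nat.
  have kN2 : k%:R ^+ 2 <= N ^+ 2 by rewrite ler_sqr // nnegrE ?ler0n // ltW.
  rewrite mulrA -expr2 -mulrA; apply: ler_wpM2r => //.
  by rewrite mulr_ge0 // ltW.
have coef0 : 0 <= (2 * N ^+ 2)^-1 / r.
  by rewrite divr_ge0 ?invr_ge0 ?mulr_ge0 ?exprn_ge0 // ltW.
case: (ltP 0 M) => Mpos; last first.
  exists 0, 0; split; first by split; rewrite ?trmx0 ?mxtrace0.
  split.
    by move=> s _; rewrite !scaler0 !addr0.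
  split.
    exists (x i).1, (x i).1, 1; rewrite /vnorm hnorm subrr !scaler0; split => //.
    split => //; split; first exact: oner_neq0.
    by rewrite subrr scaler0.
  rewrite vnorm0; apply: mulr_ge0_le0 => //.
  apply: (le_trans gapb); apply: mulr_ge0_le0 => //.
  by rewrite mulr_ge0 ?exprn_ge0 // ltW.
set c := lam i * lam j.
have c0 : 0 < c.
  rewrite lt0r mulr_ge0 // andbT; apply/eqP => h.
  by move: Mpos; rewrite /M /F /= -/c h mul0r ltxx.
set a := (x i).1; set b := (x j).1.
have Ea : rho^-1 *: outer a = q%:M + (x i).2.
  by apply/eqP; rewrite -subr_eq; apply/eqP; case: (xA i).
have Eb : rho^-1 *: outer b = q%:M + (x j).2.
  by apply/eqP; rewrite -subr_eq; apply/eqP; case: (xA j).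
have eUb : rho^-1 *: outer a - rho^-1 *: outer b = (x i).2 - (x j).2.
  by rewrite Ea Eb opprD addrACA subrr add0r.
have svU : sym0 ((x i).2 - (x j).2).
  by apply: sym0B; [case: (xA i) | case: (xA j)].
exists ((c / 2) *: (a - b)), ((c / 2) *: (rho^-1 *: outer a - rho^-1 *: outer b)).
split; first by rewrite eUb; apply: sym0Z.
split.
  move=> s hs; rewrite eUb.
  apply: (@interior_seg R n _ m U (a - b) ((x i).2 - (x j).2) c Hint svU (ltW c0)) => // u hu.
  exact: (@seg_in R n _ (m, U) k lam x i j u Hrep hu).
split.
  exists a, b, (c / 2); rewrite /vnorm !hnorm; split => //; split => //.
  by split => //; rewrite mulf_neq0 ?invr_eq0 ?gt_eqF.
rewrite vnormZ ger0_norm; last by rewrite divr_ge0 // ltW.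
have -> : c / 2 * vnorm (a - b) = M / 2 by rewrite /M /F /= -/c /D; field.
apply: (le_trans (ler_wpM2l coef0 gapb)).
rewrite le_eqVlt; apply/orP; left; apply/eqP; field.
by rewrite (gt_eqF rpos) /= gt_eqF // (lt_le_trans ltr01) // lerDl addr_ge0 ?mulr_ge0 ?ler0n.
Qed.
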